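(* Let $M_I$ and $N_J$ be factor systems with limits $M$ and $N$ respectively, and assume Condition (D). Then $[M\to_{\mathcal F}N]$ is a limit of $[M_I\to N_J]$. Equivalently, there is an isomorphism $[\mathrm{elem}(M_I)\to_{\mathcal F}\mathrm{elem}(N_J)]\simeq\mathrm{elem}([M_I\to N_J])$.
   Context: For every non-empty directed preordered set $I$ a family $\mathcal F(I)$ of subsets is fixed, each cofinal, closed under supersets and finite intersections, containing all non-empty upward closed subsets. Condition (D): for all such $I,J$, $H\in\mathcal F(I\times J)$ and $I'\in\mathcal F(I)$ imply $\{j\mid\exists i\in I',(i,j)\in H\}\in\mathcal F(J)$. System $(M_I,\triangleright)$: pairwise disjoint sets $M_i$ with relations $\triangleright\subseteq M_{i'}\times M_i$ ($i\le i'$), reflexive for $i=i'$; $a_i\approx b_j$ iff some $c\in M_{i'}$, $i'\ge i,j$, has $c\triangleright a_i,c\triangleright b_j$; prefactor: $a_{i'}\approx a_i\iff a_{i'}\triangleright a_i$. Factor system: prefactor system with $\approx$-preserving $emb_{i,i'}:M_i\to M_{i'}$, $proj_{i',i}:M_{i'}\to M_i$ with $emb_{i,i}(a)\approx a$, $proj_{i,i}(a)\approx a$, $emb_{i',i''}\circ emb_{i,i'}(a)\approx emb_{i,i''}(a)$, $proj_{i',i}\circ proj_{i'',i'}(a)\approx proj_{i'',i}(a)$, $proj_{i',i}(emb_{i,i'}(a))\approx a$, and $a_{i'}\triangleright a_i\Rightarrow emb_{i',i''}(a_{i'})\triangleright a_i$, $a_{i''}\triangleright a_i\Rightarrow proj_{i'',i'}(a_{i''})\triangleright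 a_i$ ($i\le i'\le i''$). Function space $[M_I\to N_J]$: indices $i\to j\in I\times J$ (product order), states = $\approx$-preserving functions $M_i\to N_j$, $f'\triangleright f$ iff $a_{i'}\triangleright a_i\Rightarrow f'(a_{i'})\triangleright f(a_i)$, embeddings $f\mapsto emb_{j,j'}\circ f\circ proj_{i',i}$, projections $f'\mapsto proj_{j',j}\circ f'\circ emb_{i,i'}$. A target for $M_I$: a set $M$ with a relation $a\triangleright a_i$ ($a\in M$, $a_i\in M_i$) such that $I_a:=\{i\mid\exists a_i,a\triangleright a_i\}\in\mathcal F(I)$ and $a\triangleright a_{i'}$, $a\triangleright a_i$ imply $a_{i'}\triangleright a_i$ (for factor systems also with maps $Emb_i:M_i\to M$, $Proj_i:M\to M_i$ extending the structure). A limit of $M_I$ is a target $M$ such that for every target $N'$ there is a unique map $\Phi:N'\to M$ with $b\triangleright a_i\Rightarrow\Phi(b)\triangleright a_i$; limits are unique up to isomorphism. A consistent set is $\alpha\subseteq\bigcup_iM_i$ whose elements are pairwise related by $\triangleright$ (higher stage to lower) with $\{i\mid\alpha\cap M_i\ne\emptyset\}\in\mathcal F(I)$; $\mathrm{elem}(M_I)$ is the set of inclusion-maximal consistent sets, which with the relation $\alpha\triangleright a_i\iff a_i\in\alpha$ is a limit of $M_I$. For targets $M,N$: $[M\to_{\mathcal F}N]:=\{f:M\to N\mid I_f\in\mathcal F(I\times J)\}$ with $f\triangleright f_{i\to j}$ iff for all $a\in M$, $a_i\in M_i$ with $a\triangleright a_i$, $f(a)\triangleright f_{i\to j}(a_i)$,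 and $I_f:=\{i\to j\mid\exists f_{i\to j},f\triangleright f_{i\to j}\}$. *)

(* Defs.v *)
Set Implicit Arguments.
Unset Strict Implicit.

Record dirset := DirSet {
  dcar :> Type;
  dle : dcar -> dcar -> Prop;
  dle_refl : forall i, dle i i;
  dle_trans : forall i j k, dle i j -> dle j k -> dle i k;
  dnonempty : inhabited dcar;
  ddirected : forall i j, exists k, dle i k /\ dle j k
}.
Arguments dle {d} _ _.

Definition prod_le (I J : dirset) (p q : dcar I * dcar J) : Prop :=
  dle (fst p) (fst q) /\ dle (snd p) (snd q).
Arguments prod_le : clear implicits.

Lemma prod_le_refl (I J : dirset) p : prod_le I J p p.
Proof. split; apply dle_refl. Qed.

Lemma prod_le_trans (I J : dirset) p q r :
  prod_le I J p q -> prod_le I J q r -> prod_le I J p r.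
Proof. intros [H1 H2] [H3 H4]; split; eapply dle_trans; eauto. Qed.

Lemma prod_nonempty (I J : dirset) : inhabited (dcar I * dcar J).
Proof. destruct (dnonempty I) as [i]; destruct (dnonempty J) as [j]; exact (inhabits (i, j)). Qed.
Arguments prod_nonempty : clear implicits.

Lemma prod_directed (I J : dirset) p q :
  exists r, prod_le I J p r /\ prod_le I J q r.
Proof.
  destruct (ddirected (fst p) (fst q)) as [k [H1 H2]].
  destruct (ddirected (snd p) (snd q)) as [l [H3 H4]].
  exists (k, l); split; split; assumption.
Qed.

Definition prod_dirset (I J : dirset) : dirset :=
  @DirSet (dcar I * dcar J) (prod_le I J) (@prod_le_refl I J)
          (@prod_le_trans I J) (prod_nonempty I J) (@prod_directed I J).

Definition filterfam := forall I : dirset, (dcar I -> Prop) -> Prop.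

Definition cofinal (I : dirset) (A : dcar I -> Prop) : Prop :=
  forall i, exists j, dle i j /\ A j.

Definition upclosed (I : dirset) (A : dcar I -> Prop) : Prop :=
  forall i j, dle i j -> A i -> A j.

Definition admissible (F : filterfam) : Prop :=
  forall I : dirset,
    (forall A, F I A -> cofinal A) /\
    (forall A B : dcar I -> Prop, F I A -> (forall i, A i -> B i) -> F I B) /\
    (forall A B : dcar I -> Prop, F I A -> F I B -> F I (fun i => A i /\ B i)) /\
    (forall A : dcar I -> Prop, (exists i, A i) -> upclosed A -> F I A).

Definition condD (F : filterfam) : Prop :=
  forall (I J : dirset) (H : dcar I * dcar J -> Prop) (I' : dcar I -> Prop),
    F (prod_dirset I J) H -> F I I' ->
    F J (fun j => exists i, I' i /\ H (i, j)).

Record system (I : dirset) := System {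
  st : dcar I -> Type;                                (* M_i, disjoint by typing *)
  tr : forall i' i : dcar I, st i' -> st i -> Prop    (* a_{i'} |> a_i *)
}.
Arguments st {I} s _.
Arguments tr {I} s {i' i} _ _.

Definition is_system (I : dirset) (S : system I) : Prop :=
  (forall i' i (a : st S i') (b : st S i), tr S a b -> dle i i') /\
  (forall i (a : st S i), tr S a a).

Definition eqv (I : dirset) (S : system I) (i j : dcar I) (a : st S i) (b : st S j)
  : Prop :=
  exists (k : dcar I) (c : st S k), dle i k /\ dle j k /\ tr S c a /\ tr S c b.
Arguments eqv {I} S {i j} _ _.

Definition prefactor (I : dirset) (S : system I) : Prop :=
  is_system S /\
  forall i i' (a : st S i') (b : st S i), dle i i' -> (eqv S a b <-> tr S a b).

Definition pres (I J : dirset) (S : system I) (T : system J) (i : dcar I) (j : dcar J)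
  (f : st S i -> st T j) : Prop :=
  forall a b : st S i, eqv S a b -> eqv T (f a) (f b).
Arguments pres {I J} S T {i j} _.

Record factor_data (I : dirset) (S : system I) := FactorData {
  emb : forall i i' : dcar I, dle i i' -> st S i -> st S i';
  proj : forall i i' : dcar I, dle i i' -> st S i' -> st S i
}.
Arguments emb {I S} f {i i'} _ _.
Arguments proj {I S} f {i i'} _ _.

Definition is_factor (I : dirset) (S : system I) (D : factor_data S) : Prop :=
  prefactor S /\
  (forall i i' (p : dle i i'), pres S S (emb D p)) /\
  (forall i i' (p : dle i i'), pres S S (proj D p)) /\
  (forall i (p : dle i i) (a : st S i), eqv S (emb D p a) a) /\
  (forall i (p : dle i i) (a : st S i), eqv S (proj D p a) a) /\
  (forall i i' i'' (p : dle i i') (q : dle i' i'') (r : dle i i'') (a : st S i),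
      eqv S (emb D q (emb D p a)) (emb D r a)) /\
  (forall i i' i'' (p : dle i i') (q : dle i' i'') (r : dle i i'') (a : st S i''),
      eqv S (proj D p (proj D q a)) (proj D r a)) /\
  (forall i i' (p p' : dle i i') (a : st S i),
      eqv S (proj D p (emb D p' a)) a) /\
  (forall i i' i'' (p : dle i i') (q : dle i' i'') (a' : st S i') (a : st S i),
      tr S a' a -> tr S (emb D q a') a) /\
  (forall i i' i'' (p : dle i i') (q : dle i' i'') (a'' : st S i'') (a : st S i),
      tr S a'' a -> tr S (proj D q a'') a).

Definition fun_system (I J : dirset) (SM : system I) (SN : system J)
  : system (prod_dirset I J) :=
  @System (prod_dirset I J)
    (fun p => { f : st SM (fst p) -> st SN (snd p) | pres SM SN f })
    (fun p' p f' f =>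
       prod_le I J p p' /\
       forall (a' : st SM (fst p')) (a : st SM (fst p)),
         tr SM a' a -> tr SN (proj1_sig f' a') (proj1_sig f a)).

(** * Targets and limits (a target is a carrier T with a relation a |> a_i) *)
Definition is_target (F : filterfam) (I : dirset) (S : system I) (T : Type)
  (r : T -> forall i : dcar I, st S i -> Prop) : Prop :=
  (forall a : T, F I (fun i => exists x : st S i, r a i x)) /\
  (forall (a : T) (i i' : dcar I) (x' : st S i') (x : st S i),
      dle i i' -> r a i' x' -> r a i x -> tr S x' x).
Arguments is_target F {I} S {T} r.

Definition is_limit (F : filterfam) (I : dirset) (S : system I) (T : Type)
  (r : T -> forall i : dcar I, st S i -> Prop) : Prop :=
  is_target F S r /\
  forall (T' : Type) (r' : T' -> forall i : dcar I, st S i -> Prop),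
    is_target F S r' ->
    exists! Phi : T' -> T,
      forall (b : T') (i : dcar I) (x : st S i), r' b i x -> r (Phi b) i x.
Arguments is_limit F {I} S {T} r.

Definition fun_rel (I J : dirset) (SM : system I) (SN : system J)
  (M N : Type) (rM : M -> forall i, st SM i -> Prop) (rN : N -> forall j, st SN j -> Prop)
  (f : M -> N) (p : dcar (prod_dirset I J)) (g : st (fun_system SM SN) p) : Prop :=
  forall (a : M) (x : st SM (fst p)), rM a (fst p) x -> rN (f a) (snd p) (proj1_sig g x).

Definition fun_index (I J : dirset) (SM : system I) (SN : system J)
  (M N : Type) (rM : M -> forall i, st SM i -> Prop) (rN : N -> forall j, st SN j -> Prop)
  (f : M -> N) : dcar (prod_dirset I J) -> Prop :=
  fun p => exists g : st (fun_system SM SN) p, fun_rel rM rN f g.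

Definition fun_target (F : filterfam) (I J : dirset) (SM : system I) (SN : system J)
  (M N : Type) (rM : M -> forall i, st SM i -> Prop) (rN : N -> forall j, st SN j -> Prop)
  : Type :=
  { f : M -> N | F (prod_dirset I J) (fun_index rM rN f) }.

Definition fun_target_rel (F : filterfam) (I J : dirset) (SM : system I) (SN : system J)
  (M N : Type) (rM : M -> forall i, st SM i -> Prop) (rN : N -> forall j, st SN j -> Prop)
  (f : fun_target F rM rN) (p : dcar (prod_dirset I J)) (g : st (fun_system SM SN) p)
  : Prop :=
  fun_rel rM rN (proj1_sig f) g.

(* Main.v *)
Require Import Defs.
From Stdlib Require Import IndefiniteDescription ProofIrrelevance FunctionalExtensionality.

Lemma pre_tr (I : dirset) (S : system I) : prefactor S ->
  forall k i' i (c : st S k) (u : st S i') (v : st S i),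
  dle i' k -> dle i k -> dle i i' -> tr S c u -> tr S c v -> tr S u v.
Proof.
  intros [_ H] k i' i c u v H1 H2 H3 H4 H5.
  apply (proj1 (H i i' u v H3)). exists k, c. auto.
Qed.

Arguments pre_tr {I S} _ {k i' i c u v}.

Lemma cover (F : filterfam) (I : dirset) (S : system I) (D : factor_data S)
  (M : Type) (rM : M -> forall i : dcar I, st S i -> Prop) :
  admissible F -> is_factor D -> is_limit F S rM ->
  forall i0 (z : st S i0), exists m, forall k (x : st S k), tr S z x -> rM m k x.
Proof.
  intros HF HD HM i0 z.
  pose proof HD as [Hpre [_ [_ [_ [_ [Hee [_ [_ [HembR _]]]]]]]]].
  pose proof Hpre as [[Hsys Hrefl] Hpref].
  assert (chain : forall k K (p : dle i0 k) (q : dle i0 K) (kK : dle k K),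
             tr S (emb D q z) (emb D p z)).
  { intros k K p q kK.
    pose (y := emb D p z). pose (c := emb D kK y).
    assert (Hc1 : tr S c y) by exact (HembR k k K (dle_refl k) kK y y (Hrefl _ y)).
    assert (Hc2 : tr S c (emb D q z)).
    { apply (proj1 (Hpref K K c (emb D q z) (dle_refl K))). apply Hee. }
    exact (pre_tr Hpre (dle_refl K) kK kK Hc2 Hc1). }
  pose (r' := fun (_ : unit) (k : dcar I) (x : st S k) =>
          forall K (p : dle i0 K), dle k K -> tr S (emb D p z) x).
  assert (Ht : is_target F S r').
  { split.
    - intros u. destruct (HF I) as [_ [Hmono [_ Hup]]].
      apply (Hmono (fun k => dle i0 k)).
      + apply Hup. exists i0; apply dle_refl.
        intros a b Hab Ha; eapply dle_trans; eauto.
      + intros k Hk. exists (emb D Hk z). intros K p HkK. apply chain; auto.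
    - intros u i i' x' x Hii Hx' Hx.
      destruct (ddirected i' i0) as [K [H1 H2]].
      apply (pre_tr Hpre (c := emb D H2 z) H1 (dle_trans Hii H1) Hii).
      + apply Hx'; exact H1.
      + apply Hx; exact (dle_trans Hii H1). }
  destruct HM as [_ Hu].
  destruct (Hu unit r' Ht) as [Phi [HPhi _]].
  exists (Phi tt). intros k x Hzx. apply HPhi.
  intros K p HkK. apply (HembR k i0 K (Hsys _ _ _ _ Hzx) p z x Hzx).
Qed.

Lemma sig_eq_pi (A : Type) (P : A -> Prop) (s1 s2 : sig P) :
  proj1_sig s1 = proj1_sig s2 -> s1 = s2.
Proof.
  destruct s1 as [x1 p1], s2 as [x2 p2]; simpl; intros ->.
  f_equal; apply proof_irrelevance.
Qed.

Arguments cover {F I S D M rM} _ _ _ {i0} z.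

Theorem corollary2p15 :
  forall (F : filterfam), admissible F -> condD F ->
  forall (I J : dirset)
         (SM : system I) (DM : factor_data SM), is_factor DM ->
  forall (SN : system J) (DN : factor_data SN), is_factor DN ->
  forall (M : Type) (rM : M -> forall i : dcar I, st SM i -> Prop),
    is_limit F SM rM ->
  forall (N : Type) (rN : N -> forall j : dcar J, st SN j -> Prop),
    is_limit F SN rN ->
  is_limit F (fun_system SM SN) (@fun_target_rel F I J SM SN M N rM rN).
Proof.
  intros F HF HD I J SM DM HDM SN DN HDN M rM HM N rN HN.
  pose proof HDM as HDM'.
  destruct HDM as [HpreM [_ [_ [_ [_ [HeeM [_ [_ [HembRM _]]]]]]]]].
  destruct HDN as [HpreN _].
  pose proof HpreM as [[HsysM HreflM] _].
  pose proof HM as HM'.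
  destruct HM as [[HMi HMc] HMu]. destruct HN as [[HNi HNc] HNu].
  split.
  - split.
    + intros f. exact (proj2_sig f).
    + intros f [i j] [i' j'] g' g Hle Hg' Hg. split; [exact Hle|].
      destruct Hle as [Hii Hjj].
      intros a' a Htr.
      destruct (cover HF HDM' HM' a') as [m Hm].
      pose proof (Hg' m a' (Hm _ _ (HreflM _ a'))) as H1.
      pose proof (Hg m a (Hm _ _ Htr)) as H2.
      exact (HNc _ j j' _ _ Hjj H1 H2).
  - intros T' r' [Hr'i Hr'c].
    set (R := fun (b : T') (a : M) (j : dcar J) (y : st SN j) =>
          exists (i : dcar I) (x : st SM i) (g : st (fun_system SM SN) (i, j)),
            rM a i x /\ r' b (i, j) g /\ y = proj1_sig g x).
    assert (Hex : forall b a, exists n : N,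
               (forall j y, R b a j y -> rN n j y) /\
               forall n', (forall j y, R b a j y -> rN n' j y) -> n' = n).
    { intros b a.
      assert (Ht : is_target F SN (fun (_ : unit) => R b a)).
      { split.
        - intros _. destruct (HF J) as [_ [Hmono _]].
          apply (Hmono _ _ (HD I J _ _ (Hr'i b) (HMi a))).
          intros j [i [[x Hx] [g Hg]]].
          exists (proj1_sig g x). exists i, x, g. auto.
        - intros u j j' y' y Hjj [i' [x' [g' [Hx' [Hg' ->]]]]]
                 [i [x [g [Hx [Hg ->]]]]].
          destruct (ddirected i i') as [i5 [H1 H2]].
          destruct (proj1 (HF I) _ (HMi a) i5) as [i6 [H56 [x6 Hx6]]].
          assert (Hx6x : tr SM x6 x)
            by exact (HMc a i i6 x6 x (dle_trans H1 H56) Hx6 Hx).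
          assert (Hx6x' : tr SM x6 x')
            by exact (HMc a i' i6 x6 x' (dle_trans H2 H56) Hx6 Hx').
          destruct (proj1 (HF (prod_dirset I J)) _ (Hr'i b) (i6, j'))
            as [[i4 j4] [[H64 Hj'4] [g4 Hg4]]].
          simpl in H64, Hj'4.
          pose (x4 := emb DM H64 x6).
          assert (Hx4x : tr SM x4 x)
            by exact (HembRM i i6 i4 (dle_trans H1 H56) H64 x6 x Hx6x).
          assert (Hx4x' : tr SM x4 x')
            by exact (HembRM i' i6 i4 (dle_trans H2 H56) H64 x6 x' Hx6x').
          assert (Hgg : tr (fun_system SM SN) g4 g).
          { apply (Hr'c b (i, j) (i4, j4)); auto.
            split; simpl. eapply dle_trans; [exact H1|]. eapply dle_trans; eauto.
            eapply dle_trans; eauto. }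
          assert (Hgg' : tr (fun_system SM SN) g4 g').
          { apply (Hr'c b (i', j') (i4, j4)); auto.
            split; simpl. eapply dle_trans; [exact H2|]. eapply dle_trans; eauto.
            auto. }
          destruct Hgg as [_ Hgg]. destruct Hgg' as [_ Hgg'].
          exact (pre_tr HpreN (c := proj1_sig g4 x4) Hj'4 (dle_trans Hjj Hj'4) Hjj
                   (Hgg' x4 x' Hx4x') (Hgg x4 x Hx4x)). }
      destruct (HNu unit _ Ht) as [n [Hn Hu]].
      exists (n tt). split.
      + intros j y Hy. exact (Hn tt j y Hy).
      + intros n' Hn'.
        pose proof (Hu (fun _ => n') (fun _ => Hn')) as E.
        exact (eq_sym (f_equal (fun f => f tt) E)). }
    assert (Hh : forall b a, {n : N |
               (forall j y, R b a j y -> rN n j y) /\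
               forall n', (forall j y, R b a j y -> rN n' j y) -> n' = n}).
    { intros b a. apply constructive_indefinite_description. apply Hex. }
    pose (h := fun b a => proj1_sig (Hh b a)).
    assert (Hrel : forall b p g, r' b p g -> fun_rel rM rN (h b) g).
    { intros b [i j] g Hg a x Hx. unfold h.
      apply (proj1 (proj2_sig (Hh b a))). exists i, x, g. auto. }
    assert (Hidx : forall b, F (prod_dirset I J) (fun_index rM rN (h b))).
    { intros b. destruct (HF (prod_dirset I J)) as [_ [Hmono _]].
      apply (Hmono _ _ (Hr'i b)).
      intros p [g Hg]. exists g. apply Hrel; auto. }
    exists (fun b => exist _ (h b) (Hidx b)). split.
    + intros b p g Hg. exact (Hrel b p g Hg).
    + intros Psi HPsi. apply functional_extensionality. intros b.
      apply sig_eq_pi. simpl.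
      apply functional_extensionality. intros a. unfold h.
      symmetry. apply (proj2 (proj2_sig (Hh b a))).
      intros j y [i [x [g [Hx [Hg ->]]]]].
      exact (HPsi b (i, j) g Hg a x Hx).
Qed.
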